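(* Let $g$ be a probability density on $(0,\infty)$, let $\mu_1 \sim g$, and define $p(\zeta) = P_g(\mu_1 \le \zeta)$ and $v(\zeta) = E_g(\zeta - \mu_1)^+$. Let $\lambda > 0$ and $n \ge 1$, and for $\zeta > 0$ define $$r_n(\zeta) = \frac{\lambda}{p(\zeta)} + n\, E_g(\mu_1 \mid \mu_1 \le \zeta).$$ Let $\zeta_n$ be such that $v(\zeta_n) = \frac{\lambda}{n}$. Then $$\inf_{\zeta>0} r_n(\zeta) = r_n(\zeta_n) = n\zeta_n.$$
   Context: $a^+ = \max(0,a)$. In the paper, $\lambda = \int_0^\infty E_\mu(X \mid X>0)\, g(\mu)\, d\mu$ is the mean of the first non-zero reward of a random arm, where $X \sim F_\mu$ is a non-negative reward with mean $\mu$; $r_n(\zeta)$ is the asymptotic regret of an idealized algorithm that rejects arms with mean above $\zeta$. *)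

(* Defs.v *)
From HB Require Import structures.
From mathcomp Require Import all_boot all_order all_algebra.
From mathcomp Require Import all_classical all_reals all_analysis.
Set Implicit Arguments. Unset Strict Implicit. Unset Printing Implicit Defensive.
Import Order.TTheory GRing.Theory Num.Theory.
Local Open Scope classical_set_scope.
Local Open Scope ring_scope.

Section Defs.
Variable R : realType.

Definition pg (g : R -> R) (z : R) : R :=
  fine (\int[@lebesgue_measure R]_(x in ([set` `]0, z]%R] : set R)) (g x)%:E)%E.

Definition condmean (g : R -> R) (z : R) : R :=
  fine (\int[@lebesgue_measure R]_(x in ([set` `]0, z]%R] : set R)) (x * g x)%:E)%E / pg g z.

Definition vg (g : R -> R) (z : R) : R :=
  fine (\int[@lebesgue_measure R]_(x in ([set` `]0, +oo[%R] : set R)) (Num.max (z - x) 0 * g x)%:E)%E.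

Definition rn (g : R -> R) (lam : R) (n : nat) (z : R) : R :=
  lam / pg g z + n%:R * condmean g z.

End Defs.

(* Main.v *)
Require Import Defs.
From HB Require Import structures.
From mathcomp Require Import all_boot all_order all_algebra.
From mathcomp Require Import all_classical all_reals all_analysis.
From mathcomp Require Import measurable_realfun ring lra.
Import Order.TTheory GRing.Theory Num.Theory.
Local Open Scope classical_set_scope.
Local Open Scope ring_scope.

Section S.
Variable R : realType.
Variable g : R -> R.
Hypothesis mg : measurable_fun setT g.
Hypothesis g0 : forall x : R, 0 < x -> 0 <= g x.
Local Notation mu := (@lebesgue_measure R).

Lemma mEg (D : set R) : measurable_fun D (fun x => (g x)%:E).
Proof. apply/(measurable_EFinP D); exact: measurable_funTS. Qed.

Lemma mExg (D : set R) : measurable_fun D (fun x => (x * g x)%:E).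
Proof. apply/(measurable_EFinP D); apply: measurable_funTS; apply: measurable_funM => //. Qed.

Lemma mEvg z (D : set R) : measurable_fun D (fun x => (Num.max (z - x) 0 * g x)%:E).
Proof.
apply/(measurable_EFinP D); apply: measurable_funTS; apply: measurable_funM => //.
apply: measurable_maxr => //; apply: measurable_funB => //.
Qed.

Local Open Scope ereal_scope.
Local Notation I z := ([set` `]0, z]%R] : set R).
Local Notation Dom := ([set` `]0, +oo[%R] : set R).
Local Notation Pi z := (\int[mu]_(x in I z) (g x)%:E).
Local Notation Mi z := (\int[mu]_(x in I z) (x * g x)%:E).
Local Notation Vi z := (\int[mu]_(x in Dom) (Num.max (z - x) 0 * g x)%:E).

Lemma split_dom (z : R) : (0 < z)%R -> Dom = I z `|` [set` `]z, +oo[%R].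
Proof.
move=> z0;  apply/seteqP; split => x /=; rewrite !in_itv /= ?andbT.
  move=> x0; case: (leP x z) => xz; [left|right]; rewrite /= ?in_itv /= ?x0 ?xz //.
case=> /=; rewrite ?in_itv /= ?andbT; [by case/andP|]; move=> zx; exact: lt_trans zx.
Qed.

Lemma E1 z : (0 < z)%R -> Vi z + Mi z = z%:E * Pi z.
Proof.
move=> z0.
have vg0 : forall x, Dom x -> 0 <= (Num.max (z - x) 0 * g x)%:E.
  move=> x; rewrite /= in_itv /= andbT => x0; rewrite lee_fin mulr_ge0 //.
  + by rewrite le_max lexx orbT.
  + exact: g0.
have dis : [disjoint I z & [set` `]z, +oo[%R]].
  apply/disj_setPS => x []; rewrite /=; rewrite !in_itv /= => /andP[_ xz] /andP[zx _].
  by move: (lt_le_trans zx xz); rewrite ltxx.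
have vg0' : forall x, (I z `|` [set` `]z, +oo[%R]) x -> 0 <= (Num.max (z - x) 0 * g x)%:E.
  by rewrite -(split_dom z z0).
rewrite (split_dom z z0) ge0_integral_setU //; first last.
  exact: (mEvg z).
rewrite [X in _ + X + _]integral0_eq ?adde0; last first.
  move=> x /=; rewrite in_itv /= andbT => zx.
  by rewrite (_ : Num.max _ _ = 0%R) ?mul0r // max_r // subr_le0 ltW.
have Ig0 : forall x, I z x -> (0 < x)%R.
  by move=> x; rewrite /= in_itv /= => /andP[].
have h1 : forall x, I z x -> 0 <= (Num.max (z - x) 0 * g x)%:E.
  move=> x /Ig0 x0; rewrite lee_fin mulr_ge0 //; last exact: g0.
  by rewrite le_max lexx orbT.
have h2 : forall x, I z x -> 0 <= (x * g x)%:E.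
  move=> x /Ig0 x0; rewrite lee_fin mulr_ge0 //; [exact: ltW|exact: g0].
have h3 : forall x, I z x -> 0 <= (g x)%:E.
  move=> x /Ig0 x0; rewrite lee_fin; exact: g0.
rewrite -ge0_integralD //; last first.
  exact: mExg.
  exact: (mEvg z).
rewrite -ge0_integralZl_EFin //; last first.
  exact: ltW.
  exact: mEg.
apply: eq_integral => x; rewrite inE /= in_itv /= => /andP[x0 xz].
rewrite max_l ?subr_ge0 // -EFinD -EFinM; congr EFin; ring.
Qed.

Lemma IsubD z : I z `<=` Dom.
Proof. by move=> x /=; rewrite !in_itv /= andbT => /andP[]. Qed.

Lemma E2 z zn : (0 < z)%R -> (0 < zn)%R -> zn%:E * Pi z <= Vi zn + Mi z.
Proof.
move=> z0 zn0.
have Ig0 : forall x, I z x -> (0 < x)%R.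
  by move=> x; rewrite /= in_itv /= => /andP[].
have h1 : forall x, Dom x -> 0 <= (Num.max (zn - x) 0 * g x)%:E.
  move=> x; rewrite /= in_itv /= andbT => x0; rewrite lee_fin mulr_ge0 //; last exact: g0.
  by rewrite le_max lexx orbT.
have h1' : forall x, I z x -> 0 <= (Num.max (zn - x) 0 * g x)%:E.
  by move=> x /IsubD /h1.
have h2 : forall x, I z x -> 0 <= (x * g x)%:E.
  move=> x /Ig0 x0; rewrite lee_fin mulr_ge0 //; [exact: ltW|exact: g0].
have h3 : forall x, I z x -> 0 <= (g x)%:E.
  move=> x /Ig0 x0; rewrite lee_fin; exact: g0.
apply: (@le_trans _ _ (\int[mu]_(x in I z) (Num.max (zn - x) 0 * g x)%:E + Mi z)); last first.
  rewrite leeD2r //; apply: ge0_subset_integral => //.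
  - exact: (mEvg zn).
  - exact: IsubD.
rewrite -ge0_integralD //; last first.
  exact: mExg.
  exact: (mEvg zn).
rewrite -ge0_integralZl_EFin //; last first.
  exact: ltW.
  exact: mEg.
apply: ge0_le_integral => //.
- by move=> x /h3 h; rewrite mule_ge0 // lee_fin ltW.
- apply/measurable_EFinP; apply: measurable_funTS; apply: measurable_funM => //.
- apply/measurable_EFinP; apply: measurable_funTS; apply: measurable_funD => //.
  + apply: measurable_funM => //; apply: measurable_maxr => //; apply: measurable_funB => //.
  + apply: measurable_funM => //.
move=> x /Ig0 x0; rewrite -EFinD -EFinM lee_fin -mulrDl ler_wpM2r //.
  exact: g0.
by rewrite -lerBlDr le_max lexx.
Qed.

Lemma Pi_le1 z : (\int[mu]_(x in Dom) (g x)%:E) = 1 -> Pi z <= 1.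
Proof.
move=> <-; apply: ge0_subset_integral => //.
- exact: mEg.
- by move=> x; rewrite /= in_itv /= andbT => x0; rewrite lee_fin g0.
- exact: IsubD.
Qed.

Lemma Vi_le0 zn : (zn <= 0)%R -> Vi zn = 0.
Proof.
move=> zn0; apply: integral0_eq => x; rewrite /= in_itv /= andbT => x0.
by rewrite max_r ?mul0r // subr_le0 (le_trans zn0) // ltW.
Qed.

Section Fin.
Hypothesis int1 : (\int[mu]_(x in Dom) (g x)%:E) = 1.

Lemma Pi_ge0 z : 0 <= Pi z.
Proof. by apply: integral_ge0 => x; rewrite /= in_itv /= => /andP[x0 _]; rewrite lee_fin g0. Qed.
Lemma Mi_ge0 z : 0 <= Mi z.
Proof.
apply: integral_ge0 => x; rewrite /= in_itv /= => /andP[x0 _].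
by rewrite lee_fin mulr_ge0 ?g0 // ltW.
Qed.
Lemma Vi_ge0 z : 0 <= Vi z.
Proof.
apply: integral_ge0 => x; rewrite /= in_itv /= andbT => x0.
by rewrite lee_fin mulr_ge0 ?g0 // le_max lexx orbT.
Qed.

Lemma finP z : Pi z \is a fin_num.
Proof.
by rewrite ge0_fin_numE ?Pi_ge0 // (le_lt_trans (Pi_le1 z int1)) // ltry.
Qed.

Lemma finVM z : (0 < z)%R -> Vi z \is a fin_num /\ Mi z \is a fin_num.
Proof.
move=> z0; have e := E1 z z0.
have fs : Vi z + Mi z \is a fin_num by rewrite e fin_numM // finP.
have hV := Vi_ge0 z; have hM := Mi_ge0 z.
split; rewrite ge0_fin_numE //; apply: (le_lt_trans _ (_ : Vi z + Mi z < +oo)).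
- by rewrite leeDl.
- by rewrite -ge0_fin_numE // adde_ge0.
- by rewrite leeDr.
- by rewrite -ge0_fin_numE // adde_ge0.
Qed.

Lemma RE1 z : (0 < z)%R -> (fine (Vi z) + fine (Mi z) = z * fine (Pi z))%R.
Proof.
move=> z0; have [fV fM] := finVM z z0; have fP := finP z.
by move: (E1 z z0); rewrite -(fineK fV) -(fineK fM) -(fineK fP) -EFinD -EFinM => -[].
Qed.

Lemma RE2 z zn : (0 < z)%R -> (0 < zn)%R -> (zn * fine (Pi z) <= fine (Vi zn) + fine (Mi z))%R.
Proof.
move=> z0 zn0; have [fV _] := finVM zn zn0; have [_ fM] := finVM z z0; have fP := finP z.
by move: (E2 z zn z0 zn0); rewrite -(fineK fV) -(fineK fM) -(fineK fP) -EFinD -EFinM lee_fin.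
Qed.
End Fin.

End S.

Theorem lemma1 (R : realType) (g : R -> R) (lam : R) (n : nat) (zn : R) :
  measurable_fun setT g ->
  (forall x : R, 0 < x -> 0 <= g x) ->
  (\int[@lebesgue_measure R]_(x in ([set` `]0, +oo[%R] : set R)) (g x)%:E)%E = 1%E ->
  0 < lam -> (0 < n)%N ->
  vg g zn = lam / n%:R ->
  ereal_inf [set (rn g lam n z)%:E | z in [set z : R | 0 < z /\ 0 < pg g z]]
    = (rn g lam n zn)%:E
  /\ rn g lam n zn = n%:R * zn.
Proof.
move=> mg g0 int1 lam0 n0 hv.
have nR0 : (0 < n%:R :> R) by rewrite ltr0n.
have vpos : 0 < vg g zn by rewrite hv divr_gt0.
have zn0 : 0 < zn.
  rewrite ltNge; apply/negP => zle.
  by move: vpos; rewrite /vg (@Vi_le0 R g zn zle) ltxx.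
have lamE : lam = n%:R * vg g zn by rewrite hv mulrC divfK // gt_eqF.
have e1 := @RE1 R g mg g0 int1 zn zn0.
have Mge0 : forall z, 0 <= fine (\int[@lebesgue_measure R]_(x in ([set` `]0, z]%R] : set R)) (x * g x)%:E)%E.
  by move=> z; apply: fine_ge0; apply: Mi_ge0.
have Pge0 : forall z, 0 <= pg g z.
  by move=> z; apply: fine_ge0; apply: Pi_ge0.
have Pzn : 0 < pg g zn.
  have : 0 < zn * pg g zn.
    rewrite /pg -e1; apply: (lt_le_trans vpos); rewrite /vg lerDl; exact: Mge0.
  by rewrite pmulr_rgt0.
have rzn : rn g lam n zn = n%:R * zn.
  rewrite /rn /condmean lamE.
  have -> : fine (\int[@lebesgue_measure R]_(x in ([set` `]0, zn]%R] : set R)) (x * g x)%:E)%E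
     = zn * pg g zn - vg g zn by rewrite /pg -e1 /vg; ring.
  by field; rewrite gt_eqF.
split => //.
rewrite rzn; apply/le_anti/andP; split.
  by apply: ereal_inf_lbound; exists zn => //; rewrite -rzn.
apply: le_ereal_inf_tmp => _ [z [z0 Pz] <-]; rewrite lee_fin.
have e2 := @RE2 R g mg g0 int1 z zn z0 zn0.
rewrite /rn /condmean lamE.
have -> : n%:R * vg g zn / pg g z +
   n%:R * (fine (\int[@lebesgue_measure R]_(x in ([set` `]0, z]%R] : set R)) (x * g x)%:E)%E / pg g z)
   = (n%:R * (vg g zn + fine (\int[@lebesgue_measure R]_(x in ([set` `]0, z]%R] : set R)) (x * g x)%:E)%E)) / pg g z.
  by field; rewrite gt_eqF.
rewrite ler_pdivlMr // -mulrA ler_wpM2l //; exact: ltW.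
Qed.
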